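(* Let $P$ be a nilpotent linear operator on a finite-dimensional real or complex symplectic vector space $(V, B)$, self-adjoint with respect to $B$, and suppose that $(V, B, P)$ is a direct sum of Jordan blocks all of the same height $k$. Then the subspaces of $V$ invariant under $\mathrm{Aut}(V, B, P)$ are exactly the subspaces $\operatorname{Ker} P^i = \operatorname{Im} P^{k-i}$, $0 \le i \le k$.
   Context: $P$ self-adjoint with respect to $B$ means $B(Pu,v) = B(u,Pv)$. $\mathrm{Aut}(V,B,P)$ is the group of linear automorphisms of $V$ preserving $B$ and commuting with $P$. A Jordan block of height $k$ (with eigenvalue $0$) is a $2k$-dimensional $B$-orthogonal summand with a basis in which $B = \begin{pmatrix} 0 & E_k \\ -E_k & 0\end{pmatrix}$ and the form $A(u,v) = B(Pu,v)$ has matrix $\begin{pmatrix} 0 & J_k(0) \\ -J_k(0)^T & 0\end{pmatrix}$, where $J_k(0)$ is the nilpotent $k\times k$ Jordan cell; on such a block $P$ acts as two nilpotent Jordan cells of size $k$. ''$(V,B,P)$ is a direct sum of such blocks'' means $V$ decomposes into a $B$-orthogonal, $P$-invariant direct sum of such blocks. *)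

(* Defs.v *)
From HB Require Import structures.
From mathcomp Require Import all_boot all_order all_algebra.
From mathcomp Require Import complex.
From mathcomp Require Import reals.
Set Implicit Arguments. Unset Strict Implicit. Unset Printing Implicit Defensive.
Import Order.TTheory GRing.Theory Num.Theory.
Local Open Scope ring_scope.

Definition real_or_complex (K : fieldType) : Prop :=
  exists R : realType,
    (exists f : {rmorphism R -> K}, bijective f) \/
    (exists f : {rmorphism R[i] -> K}, bijective f).

(* Conventions: V = 'rV[K]_n (row vectors), operators act on the right:
   P acts as u |-> u *m P.  The bilinear form with Gram matrix B is
   B(u,v) = u *m B *m v^T. *)

(* Gram matrix of the standard form on one Jordan block of height k
   (indices 0..2k-1): [[0, E_k], [-E_k, 0]]. *)
Definition blockB (K : fieldType) (k a b : nat) : K :=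
  if (a < k)%N && (k <= b)%N && (b - k == a)%N then 1
  else if (k <= a)%N && (b < k)%N && (a - k == b)%N then -1
  else 0.

Definition jordan0 (K : fieldType) (a c : nat) : K := if c == a.+1 then 1 else 0.

(* Gram matrix of A(u,v) = B(Pu,v) on one block: [[0, J_k(0)], [-J_k(0)^T, 0]]. *)
Definition blockA (K : fieldType) (k a b : nat) : K :=
  if (a < k)%N && (k <= b)%N then jordan0 K a (b - k)
  else if (k <= a)%N && (b < k)%N then - jordan0 K b (a - k)
  else 0.

(* Block-diagonal sums of (arbitrarily many) copies, indexed by 'I_n with
   n a multiple of 2k: consecutive index blocks of length 2k. *)
Definition stdB (K : fieldType) (n k : nat) : 'M[K]_n :=
  \matrix_(i, j) (if (i %/ (2 * k) == j %/ (2 * k))%N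
                  then blockB K k (i %% (2 * k)) (j %% (2 * k)) else 0).
Definition stdA (K : fieldType) (n k : nat) : 'M[K]_n :=
  \matrix_(i, j) (if (i %/ (2 * k) == j %/ (2 * k))%N
                  then blockA K k (i %% (2 * k)) (j %% (2 * k)) else 0).

Definition symplectic (K : fieldType) (n : nat) (B : 'M[K]_n) : Prop :=
  B^T = - B /\ B \in unitmx.

Definition self_adjoint (K : fieldType) (n : nat) (B P : 'M[K]_n) : Prop :=
  forall u v : 'rV[K]_n, (u *m P) *m B *m v^T = u *m B *m (v *m P)^T.

Definition nilpotent_mx (K : fieldType) (n : nat) (P : 'M[K]_n) : Prop :=
  exists r : nat, P ^+ r = 0.

(* (V,B,P) is a direct sum of Jordan blocks all of height k: there is a basis
   (rows of the invertible matrix S) in which B and A = B(P.,.) have the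
   standard block-diagonal Gram matrices. *)
Definition jordan_blocks_of_height (K : fieldType) (n : nat) (B P : 'M[K]_n)
    (k : nat) : Prop :=
  (2 * k %| n)%N /\
  exists S : 'M[K]_n, S \in unitmx /\
    S *m B *m S^T = stdB K n k /\ S *m (P *m B) *m S^T = stdA K n k.

Definition in_Aut (K : fieldType) (n : nat) (B P g : 'M[K]_n) : Prop :=
  g \in unitmx /\ (forall u v : 'rV[K]_n, (u *m g) *m B *m (v *m g)^T = u *m B *m v^T)
  /\ P *m g = g *m P.

Definition Aut_invariant (K : fieldType) (n : nat) (B P U : 'M[K]_n) : Prop :=
  forall g, in_Aut B P g -> (U *m g <= U)%MS.

(* Main.v *)
Require Import Defs.
From HB Require Import structures.
From mathcomp Require Import all_boot all_order all_algebra.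
From mathcomp Require Import complex reals.
From mathcomp Require Import zify ring.
Set Implicit Arguments. Unset Strict Implicit.
Import GRing.Theory.
Local Open Scope ring_scope.


Section Pmx.
Variables (K : fieldType) (n : nat).

Definition pmx (c : 'I_n -> K) (f : 'I_n -> 'I_n) : 'M[K]_n :=
  \matrix_(i, j) if j == f i then c i else 0.

Lemma pmxE c f i j : pmx c f i j = if j == f i then c i else 0.
Proof. by rewrite mxE. Qed.

Lemma mul_pmx c f (A : 'M[K]_n) i j : (pmx c f *m A) i j = c i * A (f i) j.
Proof.
rewrite !mxE (bigD1 (f i)) //= mxE eqxx big1 ?addr0 // => l /negbTE nl.
by rewrite mxE nl mul0r.
Qed.

Lemma mul_mx_pmxT (A : 'M[K]_n) d g i j : (A *m (pmx d g)^T) i j = A i (g j) * d j.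
Proof.
rewrite !mxE (bigD1 (g j)) //= !mxE eqxx big1 ?addr0 // => l /negbTE nl.
by rewrite !mxE nl mulr0.
Qed.

Lemma mul_mx_pmx m (A : 'M[K]_(m, n)) c f g :
  (forall i j, (j == f i) = (i == g j)) ->
  forall r j, (A *m pmx c f) r j = A r (g j) * c (g j).
Proof.
move=> fg r j; rewrite !mxE (bigD1 (g j)) //= mxE fg eqxx big1 ?addr0 // => l nl.
by rewrite mxE fg (negbTE nl) mulr0.
Qed.

Lemma pmxM c f d g :
  pmx c f *m pmx d g = pmx (fun i => c i * d (f i)) (fun i => g (f i)).
Proof.
apply/matrixP=> i j; rewrite mul_pmx !pmxE.
by case: ifP => _; rewrite ?mulr0.
Qed.

Lemma pmx_eq c f d g :
  (forall i, c i = d i /\ (c i = 0 \/ f i = g i)) -> pmx c f = pmx d g.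
Proof.
move=> H; apply/matrixP=> i j; rewrite !pmxE.
have [cd [c0|->]] := H i; last by rewrite cd.
by rewrite -cd c0; case: ifP; case: ifP.
Qed.

Lemma row_pmx c f i : row i (pmx c f) = c i *: delta_mx 0 (f i).
Proof.
apply/rowP=> j; rewrite !mxE eqxx /=.
by case: (j == f i); rewrite ?mulr1 ?mulr0.
Qed.

Lemma addE (A B : 'M[K]_n) i j : (A + B) i j = A i j + B i j.
Proof. by rewrite mxE. Qed.

Lemma pmxB c d f : pmx c f - pmx d f = pmx (fun i => c i - d i) f.
Proof. by apply/matrixP=> i j; rewrite !mxE; case: ifP; rewrite ?subr0. Qed.

Lemma pmxZ a c f : a *: pmx c f = pmx (fun i => a * c i) f.
Proof. by apply/matrixP=> i j; rewrite !mxE; case: ifP; rewrite ?mulr0. Qed.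

Lemma delta_pmx c f i : (delta_mx 0 i : 'rV[K]_n) *m pmx c f = c i *: delta_mx 0 (f i).
Proof. by rewrite -rowE row_pmx. Qed.

Lemma pmx1 : pmx (fun _ => 1) id = 1%:M.
Proof. by apply/matrixP=> i j; rewrite !mxE eq_sym; case: (i == j). Qed.

End Pmx.
Arguments pmx {K n}.

Ltac bash := repeat match goal with
  | |- context [if ?c then _ else _] => destruct c eqn:?; try (exfalso; lia)
  | H : context [if ?c then _ else _] |- _ => destruct c eqn:?; try (exfalso; lia)
  end; try (by lia); try ring.

Section Idx.
Variables (K : fieldType) (m k : nat).
Hypothesis k0 : (0 < k)%N.
Local Notation n := (m * (2 * k))%N.
Local Notation K2 := (2 * k)%N.

Definition bq (i : 'I_n) := (i %/ K2)%N.
Definition ba (i : 'I_n) := (i %% K2)%N.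
Lemma K2_gt0 : (0 < K2)%N. Proof. lia. Qed.
Lemma idxE (i : 'I_n) : val i = (bq i * K2 + ba i)%N. Proof. exact: divn_eq. Qed.
Lemma ba_lt i : (ba i < K2)%N. Proof. by rewrite ltn_pmod // K2_gt0. Qed.
Lemma bq_lt i : (bq i < m)%N. Proof. by rewrite /bq ltn_divLR ?K2_gt0. Qed.

Lemma enc_lt q c : (q < m)%N -> (c < K2)%N -> (q * K2 + c < n)%N.
Proof.
move=> qm cK; apply: (@leq_trans ((q.+1) * K2)); first by rewrite mulSn; lia.
by rewrite leq_mul2r qm orbT.
Qed.

Definition mkq (i : 'I_n) (q c : nat) : 'I_n := insubd i (q * K2 + c)%N.
Lemma mkq_val i q c : (q < m)%N -> (c < K2)%N -> val (mkq i q c) = (q * K2 + c)%N.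
Proof. by move=> qm cK; rewrite val_insubd enc_lt. Qed.
Lemma bq_mkq i q c : (q < m)%N -> (c < K2)%N -> bq (mkq i q c) = q.
Proof.
move=> qm cK; rewrite /bq mkq_val // divnMDl ?K2_gt0 // divn_small //.
by rewrite addn0.
Qed.
Lemma ba_mkq i q c : (q < m)%N -> (c < K2)%N -> ba (mkq i q c) = c.
Proof. by move=> qm cK; rewrite /ba mkq_val // modnMDl modn_small. Qed.
Lemma eq_idx (i j : 'I_n) : (i == j) = (bq i == bq j) && (ba i == ba j).
Proof.
apply/idP/idP => [/eqP -> | /andP [/eqP e1 /eqP e2]]; first by rewrite !eqxx.
by apply/eqP/val_inj; rewrite /= (idxE i) (idxE j) e1 e2.
Qed.

Definition sB (i : 'I_n) : K := if (ba i < k)%N then 1 else -1.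
Definition partner i := mkq i (bq i) (if (ba i < k)%N then ba i + k else ba i - k)%N.
Lemma bq_partner i : bq (partner i) = bq i.
Proof. by rewrite bq_mkq ?bq_lt //; have := ba_lt i; case: ifP => ?; lia. Qed.
Lemma ba_partner i : ba (partner i) = (if (ba i < k)%N then ba i + k else ba i - k)%N.
Proof. by rewrite ba_mkq ?bq_lt //; have := ba_lt i; case: ifP => ?; lia. Qed.

Lemma stdB_pmx : stdB K n k = pmx sB partner.
Proof.
apply/matrixP=> i j; rewrite mxE pmxE eq_idx bq_partner ba_partner /sB /blockB.
rewrite -/(bq i) -/(bq j) -/(ba i) -/(ba j).
move: (ba_lt i) (ba_lt j); move: (bq i) (bq j) (ba i) (ba j) => qi qj a b ha hb.
bash.
Qed.

Definition cN (i : 'I_n) : K := if (ba i == k.-1) || (ba i == k) then 0 else 1.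
Definition down i := mkq i (bq i) (if (ba i < k)%N then (ba i).+1 else (ba i).-1)%N.
Lemma bq_down i : bq (down i) = bq i.
Proof. by rewrite bq_mkq ?bq_lt //; have := ba_lt i; case: ifP => ?; lia. Qed.
Lemma ba_down i : ba (down i) = (if (ba i < k)%N then (ba i).+1 else (ba i).-1)%N.
Proof. by rewrite ba_mkq ?bq_lt //; have := ba_lt i; case: ifP => ?; lia. Qed.
Definition N0 := pmx cN down.

Lemma N0_stdB : N0 *m stdB K n k = stdA K n k.
Proof.
apply/matrixP=> i j; rewrite mul_pmx !mxE.
rewrite -/(bq (down i)) -/(ba (down i)) -/(bq i) -/(bq j) -/(ba i) -/(ba j).
rewrite bq_down ba_down /cN /blockB /blockA /jordan0.
move: (ba_lt i) (ba_lt j); move: (bq i) (bq j) (ba i) (ba j) => qi qj a b ha hb.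
bash.
Qed.


Definition fs i := mkq i (bq i) (K2.-1 - ba i)%N.
Lemma bq_fs i : bq (fs i) = bq i.
Proof. by rewrite bq_mkq ?bq_lt //; have := ba_lt i; lia. Qed.
Lemma ba_fs i : ba (fs i) = (K2.-1 - ba i)%N.
Proof. by rewrite ba_mkq ?bq_lt //; have := ba_lt i; lia. Qed.
Definition sgm := pmx sB fs.

Definition cz (i : 'I_n) : K := if (ba i < k.-1)%N then 1 else 0.
Definition fz i := mkq i (bq i) (K2 - 2 - ba i)%N.
Lemma bq_fz i : bq (fz i) = bq i.
Proof. by rewrite bq_mkq ?bq_lt //; have := ba_lt i; lia. Qed.
Lemma ba_fz i : ba (fz i) = (K2 - 2 - ba i)%N.
Proof. by rewrite ba_mkq ?bq_lt //; have := ba_lt i; lia. Qed.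
Definition Zm := pmx cz fz.

Definition ft (q1 q2 : 'I_m) i :=
  mkq i (if bq i == q1 then (q2 : nat) else if bq i == q2 then (q1 : nat) else bq i) (ba i).
Lemma bq_ft q1 q2 i : bq (ft q1 q2 i) =
  (if bq i == q1 then (q2 : nat) else if bq i == q2 then (q1 : nat) else bq i)%N.
Proof. by rewrite bq_mkq ?ba_lt //; case: ifP => _ //; case: ifP => _ //; apply: bq_lt. Qed.
Lemma ba_ft q1 q2 i : ba (ft q1 q2 i) = ba i.
Proof. by rewrite ba_mkq ?ba_lt //; case: ifP => _ //; case: ifP => _ //; apply: bq_lt. Qed.
Definition tau q1 q2 := pmx (fun _ => 1 : K) (ft q1 q2).

Definition ct (q : nat) (i : 'I_n) : K :=
  if bq i == q then (if (ba i < k)%N then 2 else 2^-1) else 1.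
Definition Tm q := pmx (ct q) id.

Definition px (q : nat) (i : 'I_n) : K := if (bq i == q) && (ba i < k)%N then 1 else 0.
Definition d1 (i : 'I_n) : K := if (ba i == k.-1) || (ba i == k) then 1 else 0.

Definition layer (i : 'I_n) := if (ba i < k)%N then (k.-1 - ba i)%N else (ba i - k)%N.
Definition lower j i := mkq i (bq i) (if (ba i < k)%N then ba i + j else ba i - j)%N.
Lemma bq_lower j i : (j <= layer i)%N -> bq (lower j i) = bq i.
Proof. by rewrite /layer => h; rewrite bq_mkq ?bq_lt //; have := ba_lt i; move: h; case: ifP => ?; lia. Qed.
Lemma ba_lower j i : (j <= layer i)%N ->
  ba (lower j i) = (if (ba i < k)%N then ba i + j else ba i - j)%N.
Proof. by rewrite /layer => h; rewrite ba_mkq ?bq_lt //; have := ba_lt i; move: h; case: ifP => ?; lia. Qed.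
Definition top i := mkq i (bq i) (if (ba i < k)%N then 0 else K2.-1)%N.
Lemma bq_top i : bq (top i) = bq i.
Proof. by rewrite bq_mkq ?bq_lt //; case: ifP => ?; lia. Qed.
Lemma ba_top i : ba (top i) = (if (ba i < k)%N then 0 else K2.-1)%N.
Proof. by rewrite ba_mkq ?bq_lt //; case: ifP => ?; lia. Qed.

Ltac idx := rewrite ?eq_idx ?bq_partner ?ba_partner ?bq_down ?ba_down ?bq_fs ?ba_fs
  ?bq_fz ?ba_fz ?bq_ft ?ba_ft ?bq_top ?ba_top.

Lemma pmx_iso c f :
  (forall i j, c i * c j * pmx sB partner (f i) (f j) = pmx sB partner i j) ->
  pmx c f *m pmx sB partner *m (pmx c f)^T = pmx sB partner.
Proof. by move=> H; apply/matrixP=> i j; rewrite mul_mx_pmxT mul_pmx -[RHS]H mulrAC. Qed.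

Lemma sig_iso : sgm *m pmx sB partner *m sgm^T = pmx sB partner.
Proof.
apply: pmx_iso => i j; rewrite !pmxE; idx; rewrite /sB; idx.
move: (ba_lt i) (ba_lt j); move: (bq i) (bq j) (ba i) (ba j) => qi qj a b ha hb.
bash.
Qed.

Lemma sig_comm : sgm *m N0 = N0 *m sgm.
Proof.
apply/matrixP=> i j; rewrite !mul_pmx !pmxE; idx; rewrite /sB /cN; idx.
move: (ba_lt i) (ba_lt j); move: (bq i) (bq j) (ba i) (ba j) => qi qj a b ha hb.
bash.
Qed.

Lemma tau_iso q1 q2 : tau q1 q2 *m pmx sB partner *m (tau q1 q2)^T = pmx sB partner.
Proof.
apply: pmx_iso => i j; rewrite !pmxE; idx; rewrite /sB; idx.
move: (ba_lt i) (ba_lt j); move: (bq i) (bq j) (ba i) (ba j) => qi qj a b ha hb.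
bash.
Qed.

Lemma tau_comm q1 q2 : tau q1 q2 *m N0 = N0 *m tau q1 q2.
Proof.
apply/matrixP=> i j; rewrite !mul_pmx !pmxE; idx; rewrite /cN; idx.
move: (ba_lt i) (ba_lt j); move: (bq i) (bq j) (ba i) (ba j) => qi qj a b ha hb.
bash.
Qed.

Ltac gen i j := move: (ba_lt i) (ba_lt j); move: (bq i) (bq j) (ba i) (ba j) => qi qj a b ha hb.

Lemma Z_iso : (1%:M + Zm) *m pmx sB partner *m (1%:M + Zm)^T = pmx sB partner.
Proof.
rewrite raddfD /= trmx1 mulmxDl mul1mx !mulmxDr !mulmx1 mulmxDl.
apply/matrixP=> i j; rewrite !addE !mul_mx_pmxT !mul_pmx !pmxE; idx; rewrite /sB /cz; idx.
gen i j; bash.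
Qed.

Lemma Z_comm : (1%:M + Zm) *m N0 = N0 *m (1%:M + Zm).
Proof.
rewrite mulmxDl mulmxDr mul1mx mulmx1; congr (_ + _).
apply/matrixP=> i j; rewrite !mul_pmx !pmxE; idx; rewrite /cz /cN; idx.
gen i j; bash.
Qed.

Lemma ZsN : Zm *m sgm + sgm *m Zm = - N0.
Proof.
apply/matrixP=> i j; rewrite addE !mul_pmx !mxE; idx; rewrite /cz /cN /sB; idx.
gen i j; bash.
Qed.

Hypothesis two : (2 : K) != 0.
Hypothesis three : (3 : K) != 0.

Lemma T_iso q : Tm q *m pmx sB partner *m (Tm q)^T = pmx sB partner.
Proof.
apply: pmx_iso => i j; rewrite !pmxE; idx; rewrite /sB /ct; idx.
gen i j; bash.
all: field; done.
Qed.

Lemma T_comm q : Tm q *m N0 = N0 *m Tm q.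
Proof.
apply/matrixP=> i j; rewrite !mul_pmx !pmxE; idx; rewrite /ct /cN; idx.
gen i j; bash.
Qed.

Lemma Px_eq q : pmx (px q) id =
  (2 - 2^-1)^-1 *: ((Tm q - 1%:M) *m (Tm q - (2^-1)%:M)).
Proof.
rewrite -pmx1 -scalemx1 -pmx1 pmxZ !pmxB pmxM pmxZ.
apply: pmx_eq => i; split; last by right.
rewrite /px /ct.
move: (ba_lt i); move: (bq i) (ba i) => qi a ha.
bash.
all: field; rewrite ?two ?three //.
Qed.
End Idx.



Ltac bash2 := intros; repeat match goal with
  | |- context [if ?c then _ else _] => destruct c eqn:?; try (exfalso; lia)
  | H : context [if ?c then _ else _] |- _ => destruct c eqn:?; try (exfalso; lia)
  end; try (by lia); try ring.

Lemma commX (F : fieldType) (p j : nat) (A N : 'M[F]_p) :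
  A *m N = N *m A -> A *m N ^+ j = N ^+ j *m A.
Proof.
move=> h; elim: j => [|j IH]; first by rewrite expr0 mulmx1 mul1mx.
by rewrite exprS -mulmxE mulmxA h -mulmxA IH mulmxA.
Qed.

Lemma kermx1 (F : fieldType) (p : nat) : kermx (1%:M : 'M[F]_p) = 0.
Proof. by have := mulmx_ker (1%:M : 'M[F]_p); rewrite mulmx1. Qed.

Lemma kerim_gen (F : fieldType) (p : nat) (N : 'M[F]_p) (k : nat) :
  N ^+ k = 0 -> (kermx N <= N ^+ k.-1)%MS ->
  forall j, (j <= k)%N -> (kermx (N ^+ j) == N ^+ (k - j))%MS.
Proof.
move=> Nk kerN j jk; apply/andP; split; last first.
  by rewrite sub_kermx mulmxE -exprD subnK // Nk.
elim: j jk => [|j IH] jk; first by rewrite expr0 kermx1 sub0mx.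
have IH' := IH (ltnW jk).
set X := kermx (N ^+ j.+1).
have XN : (X *m N ^+ j <= kermx N)%MS.
  rewrite sub_kermx -mulmxA.
  have -> : N ^+ j *m N = N ^+ j.+1 by rewrite exprSr mulmxE.
  by rewrite /X mulmx_ker.
have /submxP [Y eY] := submx_trans XN kerN.
have e1 : N ^+ k.-1 = N ^+ (k.-1 - j) *m N ^+ j.
  by rewrite mulmxE -exprD subnK //; lia.
have sub1 : ((X - Y *m N ^+ (k.-1 - j)) <= kermx (N ^+ j))%MS.
  by rewrite sub_kermx mulmxBl -(mulmxA Y) -e1 -eY subrr.
have e2 : (k - j.+1 = k.-1 - j)%N by lia.
rewrite -(subrK (Y *m N ^+ (k.-1 - j)) X) addmx_sub //; last by rewrite e2 submxMl.
apply: submx_trans sub1 (submx_trans IH' _).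
have -> : (k - j = (k - j.+1).+1)%N by lia.
by rewrite exprS -mulmxE submxMl.
Qed.

Section C.
Variables (K : fieldType) (m k : nat).
Hypothesis k0 : (0 < k)%N.
Local Notation n := (m * (2 * k))%N.
Local Notation K2 := (2 * k)%N.
Local Notation N0 := (N0 K m k).

Ltac idx2 := rewrite ?eq_idx ?(bq_partner k0) ?(ba_partner k0) ?(bq_down k0) ?(ba_down k0)
  ?(bq_fs k0) ?(ba_fs k0) ?(bq_fz k0) ?(ba_fz k0) ?(bq_ft k0) ?(ba_ft k0) ?(bq_top k0) ?(ba_top k0).

Lemma layer_lt (i : 'I_n) : (layer i < k)%N.
Proof. rewrite /layer; have := ba_lt k0 i; case: ifP => ?; lia. Qed.

Lemma cN_eq (i : 'I_n) : cN K i = if (layer i == 0)%N then 0 else 1.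
Proof. rewrite /cN /layer; have := ba_lt k0 i; move: (ba i) => a ha; bash2. Qed.

Lemma d1_eq (i : 'I_n) : d1 K i = if (layer i == 0)%N then 1 else 0.
Proof. rewrite /d1 /layer; have := ba_lt k0 i; move: (ba i) => a ha; bash2. Qed.

Lemma layer_down (i : 'I_n) : (0 < layer i)%N -> layer (down i) = (layer i).-1.
Proof.
rewrite /layer (ba_down k0); have := ba_lt k0 i; move: (ba i) => a ha; bash2.
Qed.

Lemma lower0 (i : 'I_n) : lower 0 i = i.
Proof.
apply/eqP; rewrite eq_idx (bq_lower k0) ?(ba_lower k0) //.
by case: ifP => _; rewrite ?addn0 ?subn0 !eqxx.
Qed.

Lemma lower_down j (i : 'I_n) : (j.+1 <= layer i)%N -> lower j (down i) = lower j.+1 i.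
Proof.
move=> h; have h' : (j <= layer (down i))%N by rewrite layer_down; lia.
apply/eqP; rewrite eq_idx !(bq_lower k0) // !(ba_lower k0) // (bq_down k0) (ba_down k0).
move: h; rewrite /layer !eqxx /=.
have := ba_lt k0 i; move: (ba i) => a ha; bash2.
Qed.

Lemma rowN0X j (i : 'I_n) :
  row i (N0 ^+ j) = if (j <= layer i)%N then delta_mx 0 (lower j i) else 0.
Proof.
elim: j i => [|j IH] i; first by rewrite expr0 row1 lower0.
rewrite exprS -mulmxE row_mul row_pmx -scalemxAl -rowE IH cN_eq.
case: eqP => li; first by rewrite scale0r li.
rewrite scale1r layer_down; last by lia.
case: ifP => h; case: ifP => h'; try lia.
  by rewrite lower_down //; lia.
by [].
Qed.

Lemma N0k : N0 ^+ k = 0.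
Proof.
apply/row_matrixP => i; rewrite rowN0X row0.
by have := layer_lt i; case: ifP => //; lia.
Qed.


Lemma ker_coord p (w : 'M[K]_(p, n)) : w *m N0 = 0 ->
  forall r j, (0 < layer j)%N -> w r j = 0.
Proof.
move=> wN r j lj.
have := congr1 (fun M : 'M[K]_(p, n) => M r (down j)) wN; rewrite !mxE (bigD1 j) //= big1.
  rewrite mxE eqxx cN_eq; case: eqP => lj'; first by lia.
  by rewrite mulr1 addr0.
move=> l nlj; rewrite mxE.
suff -> : (if down j == down l then cN K l else 0) = 0 by rewrite mulr0.
move: nlj lj; rewrite /cN /layer; idx2.
move: (ba_lt k0 l) (ba_lt k0 j); move: (bq l) (bq j) (ba l) (ba j) => ql qj a b ha hb.
bash2.
Qed.

Lemma ker_D1 p (w : 'M[K]_(p, n)) : w *m N0 = 0 -> w = w *m pmx (@d1 K m k) id.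
Proof.
move=> wN; apply/matrixP => r j; rewrite (@mul_mx_pmx _ _ _ _ _ _ id) ?d1_eq;
  last by move=> i l; rewrite eq_sym.
case: eqP => lj; first by rewrite mulr1.
rewrite mulr0 (ker_coord wN) //; lia.
Qed.

Lemma D1_sub p (A : 'M[K]_(p, n)) :
  (forall i, layer i = 0%N -> ((delta_mx 0 i : 'rV[K]_n) <= A)%MS) -> (pmx (@d1 K m k) id <= A)%MS.
Proof.
move=> H; apply/row_subP => i; rewrite row_pmx d1_eq.
case: eqP => li; first by rewrite scale1r; exact: H.
by rewrite scale0r sub0mx.
Qed.

Lemma kerN0_sub p (A : 'M[K]_(p, n)) :
  (forall i, layer i = 0%N -> ((delta_mx 0 i : 'rV[K]_n) <= A)%MS) -> (kermx N0 <= A)%MS.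
Proof.
move=> H; rewrite (ker_D1 (mulmx_ker N0)).
exact: submx_trans (submxMl _ _) (D1_sub H).
Qed.

Lemma top_layer (i : 'I_n) : layer i = 0%N ->
  (k.-1 <= layer (top i))%N /\ lower k.-1 (top i) = i.
Proof.
move=> li; have lt : (k.-1 <= layer (top i))%N.
  move: li; rewrite /layer (ba_top k0); have := ba_lt k0 i; move: (ba i) => a ha; bash2.
split => //; apply/eqP; rewrite eq_idx (bq_lower k0) // (ba_lower k0) // (bq_top k0) (ba_top k0) eqxx /=.
move: li; rewrite /layer; have := ba_lt k0 i; move: (ba i) => a ha; bash2.
Qed.

Lemma ker_im1 : (kermx N0 <= N0 ^+ k.-1)%MS.
Proof.
apply: kerN0_sub => i li; have [h e] := top_layer li.
have := rowN0X k.-1 (top i); rewrite h e => <-; exact: row_sub.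
Qed.

Lemma kerimN0 j : (j <= k)%N -> (kermx (N0 ^+ j) == N0 ^+ (k - j))%MS.
Proof. exact: kerim_gen N0k ker_im1 j. Qed.


Hypothesis two : (2 : K) != 0.
Hypothesis three : (3 : K) != 0.
Hypothesis B0u : stdB K n k \in unitmx.
Variable U : 'M[K]_n.
Hypothesis hU : Aut_invariant (stdB K n k) N0 U.

Definition good C := (U *m C <= U)%MS /\ C *m N0 = N0 *m C.

Lemma good1 : good 1%:M.
Proof. by split; rewrite ?mulmx1 ?mul1mx. Qed.

Lemma goodM A B : good A -> good B -> good (A *m B).
Proof.
move=> [hA cA] [hB cB]; split.
  by rewrite mulmxA; apply: submx_trans (submxMr _ hA) hB.
by rewrite -mulmxA cB mulmxA cA mulmxA.
Qed.

Lemma goodD A B : good A -> good B -> good (A + B).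
Proof.
move=> [hA cA] [hB cB]; split; first by rewrite mulmxDr addmx_sub.
by rewrite mulmxDl mulmxDr cA cB.
Qed.

Lemma goodZ a A : good A -> good (a *: A).
Proof.
move=> [hA cA]; split; first by rewrite -scalemxAr scalemx_sub.
by rewrite -scalemxAl cA scalemxAr.
Qed.

Lemma goodX A j : good A -> good (A ^+ j).
Proof.
move=> gA; elim: j => [|j IH]; first by rewrite expr0; exact: good1.
by rewrite exprS -mulmxE; apply: goodM.
Qed.

Lemma good_aut g : g *m pmx (@sB K m k) (@partner m k) *m g^T = pmx (@sB K m k) (@partner m k) ->
  g *m N0 = N0 *m g -> good g.
Proof.
move=> iso com; split => //; apply: hU; rewrite (stdB_pmx K m k0); split; [|split] => //.
  have : g *m pmx (@sB K m k) (@partner m k) *m g^T \in unitmx by rewrite iso -(stdB_pmx K m k0).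
  by rewrite !unitmx_mul => /andP[/andP[]].
move=> u v; rewrite trmx_mul !mulmxA -(mulmxA u g) -(mulmxA u (g *m _)) iso.
by [].
Qed.

Lemma good_sig : good (sgm K m k).
Proof. exact: good_aut (sig_iso K m k0) (sig_comm K m k0). Qed.

Lemma good_Z : good (Zm K m k).
Proof.
have g1 := good_aut (Z_iso K m k0) (Z_comm K m k0).
have -> : Zm K m k = (1%:M + Zm K m k) + (-1) *: 1%:M by rewrite scaleN1r addrAC subrr add0r.
by apply: goodD g1 (goodZ _ good1).
Qed.

Lemma good_N0 : good N0.
Proof.
have -> : N0 = (-1) *: (Zm K m k *m sgm K m k + sgm K m k *m Zm K m k).
  by rewrite (ZsN K m k0) scaleN1r opprK.
apply: goodZ; apply: goodD; apply: goodM;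
  by [exact: good_Z|exact: good_sig|exact: good_sig|exact: good_Z].
Qed.

Lemma good_tau q1 q2 : good (tau K k q1 q2).
Proof. exact: good_aut (tau_iso K k0 q1 q2) (tau_comm K k0 q1 q2). Qed.

Lemma good_T q : good (Tm K m k q).
Proof. exact: good_aut (T_iso m k0 two three q) (T_comm m k0 two three q). Qed.

Lemma good_Px q : good (pmx (@px K m k q) id).
Proof.
have gs a : good (a%:M) by rewrite -scalemx1; apply: goodZ good1.
have go A : good A -> good (- A) by move=> gA; rewrite -scaleN1r; apply: goodZ.
rewrite (Px_eq m k0 two three q); apply: goodZ; apply: goodM; apply: goodD;
  by [exact: good_T | apply: go].
Qed.


Lemma fsK (i : 'I_n) : fs (fs i) = i.
Proof.
apply/eqP; rewrite eq_idx; idx2; have := ba_lt k0 i; move: (bq i) (ba i) => q a ha; bash2.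
Qed.

Lemma fs_inv (i j : 'I_n) : (j == fs i) = (i == fs j).
Proof. by apply/eqP/eqP => ->; rewrite fsK. Qed.

Lemma reach (w : 'rV[K]_n) : w != 0 -> w *m N0 = 0 ->
  forall i, layer i = 0%N -> exists2 C, good C & w *m C = delta_mx 0 i.
Proof.
move=> w0 wN i li.
have [C0 [i1 [gC0 [w1N [w1i1 bi1]]]]] : exists C0 i1, good C0 /\
    (w *m C0) *m N0 = 0 /\ (w *m C0) 0 i1 != 0 /\ ba i1 = k.-1.
  have [j wj] : exists j, w 0 j != 0.
    case: (pickP (fun j => w 0 j != 0)) => [j hj | H]; first by exists j.
    case/negP: w0; apply/eqP/rowP => j; rewrite mxE.
    by have := H j; move/negbFE/eqP.
  have lj : layer j = 0%N.
    apply/eqP; apply: contraTT wj; rewrite -lt0n => lj.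
    by rewrite negbK (ker_coord wN).
  case: (boolP (ba j < k)%N) => bj.
    exists 1%:M, j; rewrite mulmx1; split; first exact: good1.
    split => //; split => //; move: lj; rewrite /layer bj; lia.
  exists (sgm K m k), (fs j); split; first exact: good_sig.
  split; first by rewrite -mulmxA (proj2 good_sig) mulmxA wN mul0mx.
  split.
    rewrite (@mul_mx_pmx _ _ _ _ _ _ (@fs m k)); last by move=> a b; exact: fs_inv.
    by rewrite fsK /sB (negbTE bj) mulrN1 oppr_eq0.
  rewrite (ba_fs k0); move: lj; rewrite /layer (negbTE bj); have := ba_lt k0 j; lia.
have [w1 ew1] : exists w1, w1 = w *m C0 by exists (w *m C0).
rewrite -ew1 in w1N w1i1.
have eB : w1 *m pmx (@px K m k (bq i1)) id = w1 0 i1 *: delta_mx 0 i1.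
  apply/rowP => j; rewrite (@mul_mx_pmx _ _ _ _ _ _ id); last by move=> a b; rewrite eq_sym.
  rewrite !mxE /=; case: (eqVneq j i1) => [->|nj].
    by rewrite /px eqxx bi1 /= ltn_predL k0 mulr1.
  rewrite mulr0 /px; case: ifP => hp; last by rewrite mulr0.
  have lj : (0 < layer j)%N.
    move: hp nj; rewrite eq_idx /layer bi1.
    have := ba_lt k0 j; move: (ba j) (bq j) (bq i1) => a qa qb ha; bash2.
  by rewrite (ker_coord w1N) // mul0r.
pose q := Ordinal (bq_lt k0 i); pose q1 := Ordinal (bq_lt k0 i1).
pose i2 := ft q1 q i1.
have bi2 : bq i2 = bq i /\ ba i2 = k.-1.
  by rewrite /i2 (bq_ft k0) (ba_ft k0) bi1 /= eqxx.
have e2 : (delta_mx 0 i1 : 'rV[K]_n) *m tau K k q1 q = delta_mx 0 i2 by rewrite /tau delta_pmx scale1r.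
pose C1 := C0 *m ((w1 0 i1)^-1 *: pmx (@px K m k (bq i1)) id) *m tau K k q1 q.
have gC1 : good C1 by apply: goodM (goodM gC0 (goodZ _ (good_Px _))) (good_tau _ _).
have eC1 : w *m C1 = delta_mx 0 i2.
  rewrite /C1 !mulmxA -ew1 -scalemxAr eB scalerA mulVf // scale1r.
  exact: e2.
case: (boolP (ba i < k)%N) => bi.
  exists C1 => //; rewrite eC1; congr delta_mx; apply/eqP.
  rewrite eq_idx (proj1 bi2) (proj2 bi2) eqxx /=.
  by move: li; rewrite /layer bi; have := ba_lt k0 i; lia.
exists (C1 *m sgm K m k); first by apply: goodM gC1 good_sig.
rewrite mulmxA eC1 delta_pmx /sB (proj2 bi2) ltn_predL k0 scale1r.
congr delta_mx; apply/eqP.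
rewrite eq_idx (bq_fs k0) (ba_fs k0) (proj1 bi2) (proj2 bi2) eqxx /=.
by move: li; rewrite /layer (negbTE bi); have := ba_lt k0 i; lia.
Qed.

Lemma hard : exists2 h, (h <= k)%N & (U == kermx (N0 ^+ h))%MS.
Proof.
have ex : exists h, (fun h => (U <= kermx (N0 ^+ h))%MS) h.
  by exists k; rewrite /= N0k kermx0 submx1.
case: (ex_minnP ex) => h /= hUh hmin.
have hk : (h <= k)%N by apply: hmin; rewrite /= N0k kermx0 submx1.
exists h => //; apply/andP; split => //.
have UNh : U *m N0 ^+ h = 0 by apply/sub_kermxP.
case: h hUh hmin hk UNh => [|h'] hUh hmin hk UNh.
  by rewrite expr0 kermx1 sub0mx.
have nU : ~~ (U <= kermx (N0 ^+ h'))%MS.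
  by apply/negP => /hmin; rewrite ltnn.
have [r ur] : exists r, row r U *m N0 ^+ h' != 0.
  case: (pickP (fun r => row r U *m N0 ^+ h' != 0)) => [r hr | H]; first by exists r.
  case/negP: nU; apply/sub_kermxP/row_matrixP => r; rewrite row_mul row0.
  by have := H r; move/negbFE/eqP.
set u := row r U in ur.
have wN : (u *m N0 ^+ h') *m N0 = 0.
  rewrite -mulmxA; have -> : N0 ^+ h' *m N0 = N0 ^+ h'.+1 by rewrite exprSr mulmxE.
  by rewrite /u -row_mul UNh row0.
have keyj : forall j, (j <= h')%N -> (kermx N0 <= U *m N0 ^+ j)%MS.
  move=> j jh; apply: kerN0_sub => i li.
  have [C gC eC] := reach ur wN li.
  rewrite -eC.
  have -> : N0 ^+ h' = N0 ^+ (h' - j) *m N0 ^+ j by rewrite mulmxE -exprD subnK.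
  have gAC := goodM (goodX (h' - j) good_N0) gC.
  have cC := commX j (proj2 gC).
  rewrite !mulmxA -(mulmxA _ (N0 ^+ j) C) -cC mulmxA.
  apply: submxMr; rewrite -mulmxA.
  exact: submx_trans (submxMr _ (row_sub r U)) (proj1 gAC).
have : forall j, (j <= h'.+1)%N -> (kermx (N0 ^+ j) <= U)%MS.
  elim => [|j IH] jh; first by rewrite expr0 kermx1 sub0mx.
  have IH' := IH (ltnW jh).
  set X := kermx (N0 ^+ j.+1).
  have XN : (X *m N0 ^+ j <= kermx N0)%MS.
    rewrite sub_kermx -mulmxA.
    have -> : N0 ^+ j *m N0 = N0 ^+ j.+1 by rewrite exprSr mulmxE.
    by rewrite /X mulmx_ker.
  have /submxP [Y eY] := submx_trans XN (keyj j jh).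
  have sub1 : ((X - Y *m U) <= kermx (N0 ^+ j))%MS.
    by rewrite sub_kermx mulmxBl -(mulmxA Y) -eY subrr.
  rewrite -(subrK (Y *m U) X) addmx_sub ?submxMl //.
  exact: submx_trans sub1 IH'.
by apply; rewrite leqnn.
Qed.

End C.

Import Num.Theory.


Lemma natr_neq0 (K : fieldType) : real_or_complex K ->
  forall p, (0 < p)%N -> (p%:R : K) != 0.
Proof.
move=> [R [[f [g fg gf]] | [f [g fg gf]]]] p p0; apply/eqP => h.
  have := congr1 g h; rewrite -(rmorph_nat f) fg -(rmorph0 f) fg.
  by move/eqP; rewrite pnatr_eq0; move/eqP => e; rewrite e in p0.
have := congr1 g h; rewrite -(rmorph_nat f) fg -(rmorph0 f) fg.
by move/eqP; rewrite pnatr_eq0; move/eqP => e; rewrite e in p0.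
Qed.

Lemma mx_of_form (K : fieldType) (p : nat) (g B : 'M[K]_p) :
  (forall u v : 'rV[K]_p, (u *m g) *m B *m (v *m g)^T = u *m B *m v^T) ->
  g *m B *m g^T = B.
Proof.
move=> H; apply/matrixP => i j.
have ent (A : 'M[K]_p) : ((delta_mx 0 i : 'rV[K]_p) *m A *m (delta_mx j 0 : 'cV[K]_p)) 0 0 = A i j.
  by rewrite -rowE -colE !mxE.
have := congr1 (fun M : 'M[K]_1 => M 0 0) (H (delta_mx 0 i) (delta_mx 0 j)).
rewrite /= !trmx_mul !trmx_delta !mulmxA -(mulmxA (delta_mx 0 i) g).
by rewrite -(mulmxA (delta_mx 0 i) (g *m B)) !ent.
Qed.

Lemma form_of_mx (K : fieldType) (p : nat) (g B : 'M[K]_p) :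
  g *m B *m g^T = B ->
  (forall u v : 'rV[K]_p, (u *m g) *m B *m (v *m g)^T = u *m B *m v^T).
Proof.
move=> iso u v; rewrite trmx_mul !mulmxA -(mulmxA u g) -(mulmxA u (g *m _)) iso.
by [].
Qed.

Theorem corollary1 (K : fieldType) (n k : nat) (B P : 'M[K]_n) :
  real_or_complex K ->
  symplectic B ->
  nilpotent_mx P ->
  self_adjoint B P ->
  jordan_blocks_of_height B P k ->
  (forall i : nat, (i <= k)%N -> (kermx (P ^+ i) == P ^+ (k - i))%MS) /\
  (forall U : 'M[K]_n,
     Aut_invariant B P U <-> exists2 i : nat, (i <= k)%N & (U == kermx (P ^+ i))%MS).
Proof.
move=> Hrc [_ Bu] _ _ [Hdvd [S [Su [HB HA]]]].
have natn0 := natr_neq0 Hrc.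
case: (posnP k) => [k0eq | k0].
  subst k; move: Hdvd; rewrite muln0 dvd0n => /eqP n0; subst n.
  split.
    by move=> i _; rewrite !flatmx0 submx_refl.
  move=> U; split.
    by move=> _; exists 0%N => //; rewrite !flatmx0 submx_refl.
  by move=> _ g _; rewrite !flatmx0 submx_refl.
case/dvdnP: Hdvd => m nE; subst n.
have two : (2 : K) != 0 by apply: natn0.
have three : (3 : K) != 0 by apply: natn0.
set Q := invmx S.
have B0u : stdB K (m * (2 * k)) k \in unitmx.
  by rewrite -HB !unitmx_mul Su Bu unitmx_tr Su.
have eN : S *m P *m Q = N0 K m k.
  have : (S *m P *m Q) *m stdB K (m * (2 * k)) k = N0 K m k *m stdB K (m * (2 * k)) k.
    by rewrite (N0_stdB K m k0) -HA -HB !mulmxA (mulmxKV Su) ?mulmxA.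
  by move/(congr1 (mulmx^~ (invmx (stdB K (m * (2 * k)) k)))); rewrite !mulmxK.
have eP : P = Q *m N0 K m k *m S.
  by rewrite -eN !mulmxA mulVmx // mul1mx mulmxKV.
have ePX j : P ^+ j = Q *m N0 K m k ^+ j *m S.
  elim: j => [|j IH]; first by rewrite !expr0 mulmx1 mulVmx.
  by rewrite !exprS -!mulmxE IH {1}eP !mulmxA (mulmxK Su).
have kerP j : (kermx (P ^+ j) *m Q *m N0 K m k ^+ j = 0).
  have h := mulmx_ker (P ^+ j); rewrite {2}ePX !mulmxA in h.
  by rewrite -(mulmxK Su (kermx (P ^+ j) *m Q *m N0 K m k ^+ j)) h mul0mx.
split.
  move=> i hi; apply/andP; split.
    have := submx_trans (introT sub_kermxP (kerP i)) (proj1 (andP (kerimN0 K m k0 hi))).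
    case/submxP => Y eY.
    have -> : kermx (P ^+ i) = (Y *m S) *m P ^+ (k - i).
      by rewrite [in RHS]ePX !mulmxA (mulmxK Su) -eY (mulmxKV Su).
    exact: submxMl.
  by rewrite sub_kermx mulmxE -exprD subnK // ePX (N0k K m k0) mulmx0 mul0mx.
move=> U; split.
  move=> hU.
  have hU' : Aut_invariant (stdB K (m * (2 * k)) k) (N0 K m k) (U *m Q).
    move=> h [hu [hform hcom]].
    have hB := mx_of_form hform.
    have eB : B = Q *m stdB K (m * (2 * k)) k *m Q^T.
      rewrite -HB !mulmxA mulVmx // mul1mx -mulmxA -trmx_mul mulVmx //.
      by rewrite trmx1 mulmx1.
    have gA : in_Aut B P (Q *m h *m S).
      split; first by rewrite !unitmx_mul unitmx_inv Su hu.
      split.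
        apply: form_of_mx; rewrite eB !trmx_mul !mulmxA (mulmxK Su).
        rewrite trmx_inv (mulmxKV (_ : S^T \in unitmx)); last by rewrite unitmx_tr.
        by rewrite -(mulmxA Q h) -(mulmxA Q (h *m _)) hB.
      by rewrite eP !mulmxA !(mulmxK Su) -(mulmxA Q (N0 K m k) h) hcom mulmxA.
    have := hU _ gA; move/(submxMr Q); rewrite !mulmxA (mulmxK Su).
    by [].
  have [h hk eh] := hard k0 two three B0u hU'.
  exists h => //; apply/andP; split.
    have z : U *m Q *m N0 K m k ^+ h = 0 by apply/sub_kermxP; exact: (proj1 (andP eh)).
    by rewrite sub_kermx ePX !mulmxA z mul0mx.
  have := submx_trans (introT sub_kermxP (kerP h)) (proj2 (andP eh)).
  case/submxP => Y eY.
  have -> : kermx (P ^+ h) = Y *m U.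
    by rewrite -[LHS](mulmxKV Su) -/Q eY -mulmxA (mulmxKV Su).
  exact: submxMl.
move=> [i hi eU] g [gu [gform gcom]].
have gPi := commX i (esym gcom).
apply: submx_trans (submxMr g (proj1 (andP eU))) _.
apply: submx_trans _ (proj2 (andP eU)).
by rewrite sub_kermx -mulmxA gPi mulmxA mulmx_ker mul0mx.
Qed.
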